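(* Let $R$ be an algebra with $A$-action and trace, and let $W_k\subseteq A\sim S_k$ be the set of $w$ such that $tr_w$ is a pure trace identity of $R$. Suppose $W_k$ is a two-sided ideal of $A\sim S_k$. Then for every $m\ge k$ and every $u$ in $(A\sim S_m)W_k(A\sim S_m)$, $tr_u$ is a consequence of the identities $\{tr_w:w\in W_k\}$ (obtained from them by substitutions and multiplication by pure trace polynomials), and in particular $tr_u$ is a pure trace identity of $R$.
   Context: $A$ is a semisimple $F$-algebra, $F$ of characteristic zero. An algebra with $A$-action and trace is a unital associative $F$-algebra $R$ with a unital homomorphism $A\to R$ and an $F$-linear map $tr:R\to R$ with central values, $tr(rs)=tr(sr)$ and $tr(tr(r)s)=tr(r)tr(s)$. The wreath product $A\sim S_k$ is spanned by $(a_1\otimes\cdots\otimes a_k)\sigma$ with multiplication $(a_1\otimes\cdots\otimes a_k)\sigma\cdot(b_1\otimes\cdots\otimes b_k)\tau=(a_1b_{\sigma^{-1}(1)}\otimes\cdots\otimes a_kb_{\sigma^{-1}(k)})\sigma\tau$; $A\sim S_k$ is viewed inside $A\sim S_m$ via $(a_1\otimes\cdots\otimes a_k)\sigma\mapsto(a_1\otimes\cdots\otimes a_k\otimes1\otimes\cdots\otimes1)\sigma$, $\sigma$ fixing $k+1,\dots,m$. For $\sigma$ with $\sigma^{-1}=(i_1,\dots,i_a)(j_1,\dots,j_b)\cdots$, $tr_\sigma(x_1,\dots,x_k)=tr(x_{i_1}\cdots x_{i_a})tr(x_{j_1}\cdots x_{j_b})\cdots$; for $w=(a_1\otimes\cdots\otimes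 a_k)\sigma$, $tr_w(x_1,\dots,x_k)=tr_\sigma(x_1a_1,\dots,x_ka_k)$, extended linearly; $tr_w$ is a pure trace identity of $R$ if it vanishes for all $x_i\in R$ (with $a_i$ acting through $A\to R$). *)

(* Defs.v *)
From HB Require Import structures.
From mathcomp Require Import all_boot all_order all_algebra all_fingroup.
Set Implicit Arguments. Unset Strict Implicit. Unset Printing Implicit Defensive.
Import GRing.Theory.
Local Open Scope ring_scope.

Section Semisimple.
Context (F : fieldType) (A : algType F).

Definition is_lideal (I : A -> Prop) : Prop :=
  [/\ I 0, (forall x y, I x -> I y -> I (x + y)) & (forall a x, I x -> I (a * x))].

(* A is semisimple: A is a semisimple left module over itself, i.e. every
   left ideal (submodule of the regular module) has a complementary left ideal. *)
Definition semisimple_alg : Prop :=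
  forall I, is_lideal I ->
    exists J, [/\ is_lideal J, (forall x, I x -> J x -> x = 0)
                & (forall a, exists x y, [/\ I x, J y & a = x + y])].
End Semisimple.

Section TraceAlg.
Context (F : fieldType) (A : algType F).

Definition is_trace_alg (R : algType F) (phi : A -> R) (tr : R -> R) : Prop :=
  [/\ (forall a b, phi (a + b) = phi a + phi b),
      (forall (c : F) a, phi (c *: a) = c *: phi a),
      (forall a b, phi (a * b) = phi a * phi b) &
      phi 1 = 1] /\
  [/\ (forall r s, tr (r + s) = tr r + tr s),
      (forall (c : F) r, tr (c *: r) = c *: tr r),
      (forall r s, tr r * s = s * tr r),
      (forall r s, tr (r * s) = tr (s * r)) &
      (forall r s, tr (tr r * s) = tr r * tr s)].

(* Trace polynomials with coefficients from A, in variables x_0, x_1, ... *)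
Inductive term : Type :=
  | TVar of nat
  | TAct of A
  | TAdd of term & term
  | TScale of F & term
  | TMul of term & term
  | TTr of term.

Fixpoint eval (R : algType F) (phi : A -> R) (tr : R -> R) (x : nat -> R)
   (t : term) : R :=
  match t with
  | TVar i => x i
  | TAct a => phi a
  | TAdd t1 t2 => eval phi tr x t1 + eval phi tr x t2
  | TScale c t1 => c *: eval phi tr x t1
  | TMul t1 t2 => eval phi tr x t1 * eval phi tr x t2
  | TTr t1 => tr (eval phi tr x t1)
  end.

Fixpoint subst (s : nat -> term) (t : term) : term :=
  match t with
  | TVar i => s i
  | TAct a => TAct a
  | TAdd t1 t2 => TAdd (subst s t1) (subst s t2)
  | TScale c t1 => TScale c (subst s t1)
  | TMul t1 t2 => TMul (subst s t1) (subst s t2)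
  | TTr t1 => TTr (subst s t1)
  end.

(* pure trace polynomials: polynomials in traces (with scalar coefficients) *)
Inductive pure : term -> Prop :=
  | pure_one : pure (TAct 1)
  | pure_tr t : pure (TTr t)
  | pure_add p q : pure p -> pure q -> pure (TAdd p q)
  | pure_scale c p : pure p -> pure (TScale c p)
  | pure_mul p q : pure p -> pure q -> pure (TMul p q).

(* equality in the free algebra with A-action and trace *)
Definition term_equiv (t1 t2 : term) : Prop :=
  forall (R : algType F) (phi : A -> R) (tr : R -> R),
    is_trace_alg phi tr -> forall x : nat -> R, eval phi tr x t1 = eval phi tr x t2.

Definition is_identity (R : algType F) (phi : A -> R) (tr : R -> R) (t : term) :=
  forall x : nat -> R, eval phi tr x t = 0.

Inductive consequence (G : term -> Prop) : term -> Prop :=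
  | cq_gen t : G t -> consequence G t
  | cq_subst s t : consequence G t -> consequence G (subst s t)
  | cq_add t1 t2 : consequence G t1 -> consequence G t2 -> consequence G (TAdd t1 t2)
  | cq_scale c t : consequence G t -> consequence G (TScale c t)
  | cq_mul p t : pure p -> consequence G t -> consequence G (TMul p t)
  | cq_equiv t t' : consequence G t -> term_equiv t t' -> consequence G t'.

Definition tzero : term := TScale 0 (TAct 1).
Definition tprod (s : seq term) : term := foldr TMul (TAct 1) s.
Definition tsum (s : seq term) : term := foldr TAdd tzero s.

(* A spanning element (a_1 (x) ... (x) a_k) sigma *)
Definition wmon (k : nat) := (k.-tuple A * 'S_k)%type.
(* Elements of A ~ S_k are represented by formal linear combinations of
   spanning elements; tr_w only depends on the represented element. *)
Definition wel (k : nat) := seq (F * wmon k).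

(* sigma tau as composition of functions: (sigma tau)(i) = sigma (tau i) *)
Definition pcomp k (s t : 'S_k) : 'S_k := (t * s)%g.

Definition wmon_mul k (x y : wmon k) : wmon k :=
  let: (a, s) := x in let: (b, t) := y in
  ([tuple tnth a i * tnth b ((s^-1)%g i) | i < k], pcomp s t).

Definition wel_mul k (v w : wel k) : wel k :=
  [seq (c.1 * d.1, wmon_mul c.2 d.2) | c <- v, d <- w].

Definition ext_fun k n (s : 'S_k) (i : 'I_(k + n)) : 'I_(k + n) :=
  match split i with inl j => lshift n (s j) | inr j => rshift k j end.

Lemma ext_fun_inj k n (s : 'S_k) : injective (@ext_fun k n s).
Proof.
move=> i j H; rewrite -(splitK i) -(splitK j); move: H; rewrite /ext_fun.
case: (split i) => [i'|i']; case: (split j) => [j'|j'] /= H.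
- by have /perm_inj -> : s i' = s j' by apply: val_inj; move/(congr1 val): H.
- by move/(congr1 val): H => /= H; have := ltn_ord (s i'); rewrite H ltnNge leq_addr.
- by move/(congr1 val): H => /= H; have := ltn_ord (s j'); rewrite -H ltnNge leq_addr.
- by move/(congr1 val)/eqP: H => /=; rewrite eqn_add2l => /eqP H; have -> : i' = j' by apply: val_inj.
Qed.

Definition ext_perm k n (s : 'S_k) : 'S_(k + n) := perm (@ext_fun_inj k n s).

Definition wmon_emb k n (x : wmon k) : wmon (k + n) :=
  let: (a, s) := x in ([tuple of cat a (nseq n (1 : A))], ext_perm n s).

Definition wel_emb k n (w : wel k) : wel (k + n) :=
  [seq (c.1, wmon_emb n c.2) | c <- w].

(* the trace of the cycle of sigma^{-1} through i, evaluated at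
   (x_1 a_1, ..., x_k a_k):  tr(x_i a_i x_{s' i} a_{s' i} ...), s' = sigma^{-1} *)
Definition cycle_term k (a : k.-tuple A) (s : 'S_k) (C : {set 'I_k}) : term :=
  match [pick i in C] with
  | Some i => TTr (tprod [seq (let j := (((s^-1) ^+ e)%g i) in
                               TMul (TVar j) (TAct (tnth a j))) | e <- iota 0 #|C|])
  | None => TAct 1
  end.

Definition trmon k (x : wmon k) : term :=
  let: (a, s) := x in tprod [seq cycle_term a s C | C <- enum (porbits (s^-1)%g)].

Definition trw k (w : wel k) : term := tsum [seq TScale c.1 (trmon c.2) | c <- w].

End TraceAlg.

(* Main.v *)
Require Import Defs.
From HB Require Import structures.
From mathcomp Require Import all_boot all_order all_algebra all_fingroup.
Local Open Scope ring_scope.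

Module Helpers.
Set Implicit Arguments. Unset Strict Implicit. Unset Printing Implicit Defensive.
Import GRing.Theory.

Section Central.
Variable R : pzRingType.

Lemma prod_rem (I : eqType) (H : I -> R) (r : seq I) x :
  (forall i y, H i * y = y * H i) -> x \in r ->
  \prod_(i <- r) H i = H x * \prod_(i <- rem x r) H i.
Proof.
move=> HC; elim: r => [//|y r IH]; rewrite inE /= big_cons.
have [->|ne] := eqVneq y x; first by [].
rewrite /= => xr; idtac.
by rewrite big_cons IH // !mulrA (HC y (H x)).
Qed.

Lemma perm_prodZ (I : eqType) (r1 r2 : seq I) (P : pred I) (G : I -> R) :
  (forall i y, G i * y = y * G i) -> perm_eq r1 r2 ->
  \prod_(i <- r1 | P i) G i = \prod_(i <- r2 | P i) G i.
Proof.
move=> HC; rewrite big_mkcond [RHS]big_mkcond.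
pose H i := if P i then G i else 1; rewrite -/(H _).
have HH : forall i y, H i * y = y * H i.
  by move=> i y; rewrite /H; case: (P i); rewrite ?mul1r ?mulr1.
elim: r1 r2 => [|x r1 IH] r2 Hp.
  by move: (perm_size Hp); case: r2 {Hp}.
have xr : x \in r2 by rewrite -(perm_mem Hp) mem_head.
rewrite (prod_rem HH xr) big_cons; congr (_ * _); apply: IH.
by rewrite -(perm_cons x) (perm_trans Hp) // perm_to_rem.
Qed.
End Central.

Section Period.
Variable T : finType.
Implicit Types (t : {perm T}) (x : T).
Local Open Scope nat_scope.
Local Open Scope group_scope.

Lemma permX_mod t x d i : (t ^+ d) x = x -> (t ^+ i) x = (t ^+ (i %% d)) x.
Proof.
move=> Hd; rewrite {1}(divn_eq i d) expgD permM.
suff -> : (t ^+ (i %/ d * d)%N) x = x by [].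
rewrite mulnC expgM; elim: (i %/ d)%N => [|j IH]; first by rewrite expg0 perm1.
by rewrite expgSr permM IH Hd.
Qed.

Lemma porbit_period t x d : 0 < d -> (t ^+ d) x = x ->
  porbit t x = [set (t ^+ (val j)) x | j : 'I_d].
Proof.
move=> d0 Hd; apply/setP => y; apply/idP/imsetP.
  move/porbitP => [i ->]; exists (Ordinal (ltn_pmod i d0)) => //.
  by rewrite (permX_mod i Hd).
by move=> [j _ ->]; exact: mem_porbit.
Qed.

Lemma porbit_expN t x : (t ^+ #|porbit t x|) x = x.
Proof. by rewrite permX iter_porbit. Qed.

Lemma porbit_inj t x :
  {in [pred j : 'I_#|porbit t x| | true] &, injective (fun j : 'I_#|porbit t x| => (t ^+ (val j)) x)}.
Proof.
apply/imset_injP; rewrite -porbit_period ?porbit_expN ?lt0n ?card_porbit_neq0 //.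
by rewrite card_ord.
Qed.
End Period.

Section Period2.
Variable T : finType.
Local Open Scope nat_scope.
Local Open Scope group_scope.
Lemma porbit_inj_nat (t : {perm T}) x j1 j2 : j1 < #|porbit t x| -> j2 < #|porbit t x| ->
  (t ^+ j1) x = (t ^+ j2) x -> j1 = j2.
Proof.
move=> h1 h2 E.
by have := @porbit_inj T t x (Ordinal h1) (Ordinal h2) isT isT E => -[].
Qed.
End Period2.


Section Cyc.
Variables (R : pzRingType) (tr : R -> R).
Hypothesis trC : forall r s, tr (r * s) = tr (s * r).
Hypothesis trZ : forall r s, tr r * s = s * tr r.
Variable T : finType.
Implicit Types (s : {perm T}) (f g h : T -> R) (D : {set T}).

Definition cval f s (C : {set T}) : R :=
  if [pick i in C] is Some i then tr (\prod_(e <- iota 0 #|C|) f ((s ^+ e)%g i)) else 1.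
Definition PD D f s := \prod_(C <- enum (porbits s) | ~~ (C \subset D)) cval f s C.
Definition cyc f s i := \prod_(e <- iota 0 #|porbit s i|) f ((s ^+ e)%g i).

Lemma permS s e i : (s ^+ e.+1)%g i = s ((s ^+ e)%g i).
Proof. by rewrite expgSr permM. Qed.

Lemma permS' s e i : (s ^+ e.+1)%g i = (s ^+ e)%g (s i).
Proof. by rewrite expgS permM. Qed.

Lemma porbit_s s i : porbit s (s i) = porbit s i.
Proof. by have := porbit_perm s 1 i; rewrite expg1. Qed.

Lemma card_porbitS s i : exists M, #|porbit s i| = M.+1.
Proof. by case: #|porbit s i| (card_porbit_neq0 s i) => [|M] // _; exists M. Qed.

Lemma cyc_shift f s i : tr (cyc f s (s i)) = tr (cyc f s i).
Proof.
rewrite /cyc porbit_s; have := porbit_expN s i.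
have [M ->] := card_porbitS s i => HN.
rewrite (eq_bigr (fun e => f ((s ^+ e.+1)%g i))); last by move=> e _; rewrite permS'.
rewrite -(big_map S predT (fun e => f ((s ^+ e)%g i))).
have -> : [seq e.+1 | e <- iota 0 M.+1] = iota 1 M.+1 by rewrite (iotaDl 1 0).
have -> : iota 1 M.+1 = iota 1 M ++ [:: M.+1] by rewrite -[M.+1]addn1 iotaD addnC.
rewrite big_cat /= big_seq1 HN.
by rewrite big_cons expg0 perm1 trC.
Qed.

Lemma cyc_orbit f s i j : j \in porbit s i -> tr (cyc f s j) = tr (cyc f s i).
Proof.
move=> /porbitP [n ->]; elim: n => [|n IH]; first by rewrite expg0 perm1.
by rewrite permS cyc_shift.
Qed.

Lemma cval_porbit f s i : cval f s (porbit s i) = tr (cyc f s i).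
Proof.
rewrite /cval; case: pickP => [j Hj | none]; last by have := none i; rewrite porbit_id.
have Ej : porbit s j = porbit s i by apply/eqP; rewrite eq_porbit_mem.
by rewrite -(cyc_orbit f Hj) /cyc Ej.
Qed.

Lemma regroup_aux g h (u : nat -> T) m n :
  g (u m) * \prod_(e <- iota m n) (h (u e) * g (u e.+1)) =
  \prod_(e <- iota m n) (g (u e) * h (u e)) * g (u (m + n)%N).
Proof.
elim: n m => [|n IH] m; first by rewrite !big_nil mulr1 mul1r addn0.
rewrite /= !big_cons !mulrA -(mulrA _ (g (u m.+1))) IH addSnnS.
by rewrite !mulrA.
Qed.

Lemma PD_regroup g h D s : PD D (fun j => g j * h j) s = PD D (fun j => h j * g (s j)) s.
Proof.
rewrite /PD big_seq_cond [RHS]big_seq_cond; apply: eq_bigr => C /andP [].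
rewrite mem_enum => /imsetP [i _ ->] _.
rewrite !cval_porbit /cyc; have := porbit_expN s i.
have [M ->] := card_porbitS s i => HN.
rewrite /= !big_cons expg0 !perm1.
rewrite [in RHS](eq_bigr (fun e => h ((s ^+ e)%g i) * g ((s ^+ e.+1)%g i))); last first.
  by move=> e _; rewrite permS.
have E1 : s i = (s ^+ 1)%g i by rewrite expg1.
have RA := regroup_aux g h (fun e => (s ^+ e)%g i) 1 M; simpl in RA.
rewrite E1 -[in RHS]mulrA RA add1n HN.
by rewrite -[in LHS]mulrA trC !mulrA.
Qed.
End Cyc.


Section Remove.
Variables (R : pzRingType) (tr : R -> R).
Hypothesis trC : forall r s, tr (r * s) = tr (s * r).
Hypothesis trZ : forall r s, tr r * s = s * tr r.
Variable T : finType.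
Implicit Types (s : {perm T}) (f g h : T -> R) (D : {set T}).

Notation cval := (cval tr).
Notation PD := (PD tr).

Lemma cval_central f s C y : cval f s C * y = y * cval f s C.
Proof. by rewrite /cval; case: pickP => [i _|_]; rewrite ?trZ ?mul1r ?mulr1. Qed.

Lemma perm_enumD1 (A : {set {set T}}) C : C \in A -> perm_eq (enum A) (C :: enum (A :\ C)).
Proof.
move=> CA; apply: uniq_perm; rewrite /= ?enum_uniq ?mem_enum ?setD11 //.
by move=> Y; rewrite in_cons !mem_enum in_setD1; case: eqP => // ->.
Qed.

Lemma PD_split D f s C : C \in porbits s ->
  PD D f s = (if ~~ (C \subset D) then cval f s C else 1) *
             \prod_(Y <- enum (porbits s :\ C) | ~~ (Y \subset D)) cval f s Y.
Proof.
move=> CP; rewrite /PD (perm_prodZ _ _ (perm_enumD1 CP)); last by move=> *; exact: cval_central.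
by rewrite big_cons; case: ifP; rewrite ?mul1r.
Qed.

Lemma notin_otherz s l z Y : Y \in porbits s :\ porbit s l -> z \in porbit s l -> z \notin Y.
Proof.
rewrite !inE => /andP [ne /imsetP [y _ EY]] zl; subst Y.
apply: contra ne => H; apply/eqP.
have /eqP <- : porbit s z == porbit s y by rewrite eq_porbit_mem.
by apply/eqP; rewrite eq_porbit_mem.
Qed.

Lemma notin_other s l Y : Y \in porbits s :\ porbit s l -> l \notin Y.
Proof. by move=> H; apply: notin_otherz H (porbit_id _ _). Qed.

Lemma subsetU1_notin (Y : {set T}) l D : l \notin Y -> (Y \subset l |: D) = (Y \subset D).
Proof.
move=> nl; apply/subsetP/subsetP => H y yY; move: (H y yY); rewrite ?inE.
  by case/orP => // /eqP E; subst y; rewrite yY in nl.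
by move=> ->; rewrite orbT.
Qed.

Lemma porbit_fix s l : s l = l -> porbit s l = [set l].
Proof.
move=> H; apply/setP => y; rewrite inE; apply/porbitP/eqP => [[i ->]|->].
  by rewrite permX_fix.
by exists 0%N; rewrite expg0 perm1.
Qed.

Lemma PD_fixed D f s l : s l = l -> l \notin D ->
  PD D f s = tr (f l) * PD (l |: D) f s.
Proof.
move=> sl lD; have CP : porbit s l \in porbits s by apply: imset_f.
rewrite (PD_split _ _ CP) [in RHS](PD_split _ _ CP) porbit_fix //.
have -> : ([set l] \subset D) = false.
  by apply/negbTE; apply/subsetPn; exists l; rewrite ?inE.
rewrite sub1set setU11 /= mul1r; congr (_ * _).
  rewrite /cval; case: pickP => [i|/(_ l)]; last by rewrite inE eqxx.
  by rewrite inE => /eqP ->; rewrite cards1 /= big_seq1 expg0 perm1.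
rewrite -(porbit_fix sl) big_seq_cond [RHS]big_seq_cond; apply: eq_bigl => Y.
case Ym: (Y \in _) => //=.
have nl : l \notin Y by apply: (notin_other (s:=s)); rewrite -mem_enum.
by rewrite (porbit_fix sl) subsetU1_notin.
Qed.

Lemma PD_remove D f s l : (forall d, d \in D -> s d = d) -> l \notin D -> s l != l ->
  PD D f s = PD (l |: D) (fun j => if j == s l then f l * f j else f j) (s * tperm l (s l))%g.
Proof.
move=> Dfix lD sl.
set q := s l; pose s' : {perm T} := (s * tperm l q)%g.
set f'' := fun j => if j == q then f l * f j else f j.
have s'E y : s' y = tperm l q (s y) by rewrite /s' permM.
set C := porbit s l.
have qC : q \in C by have := mem_porbit s 1 l; rewrite expg1.
have lC : l \in C by apply: porbit_id.
have closed z : (s z \in C) = (z \in C).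
  by rewrite /C -!(porbit_sym s l) porbit_s.
have sout y : y \notin C -> s' y = s y.
  move=> yC; rewrite s'E tpermD //.
    by apply: contraNneq yC => E; rewrite -closed -E.
  by apply: contraNneq yC => /perm_inj <-.
have powout y e : y \notin C -> (s' ^+ e)%g y = (s ^+ e)%g y /\ (s ^+ e)%g y \notin C.
  move=> yC; elim: e => [|e [IH1 IH2]]; first by rewrite !expg0 !perm1.
  by rewrite !permS IH1 sout // closed.
have porb_out y : y \notin C -> porbit s' y = porbit s y.
  move=> yC; apply/setP => z; apply/porbitP/porbitP => -[e ->]; exists e.
    by rewrite (powout y e yC).1.
  by rewrite (powout y e yC).1.
have s'l : s' l = l by rewrite s'E tpermR.
have [M HN] : exists M, #|C| = M.+2.
  have : (#|[set l; q]| <= #|C|)%N.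
    by apply: subset_leq_card; apply/subsetP => z; rewrite !inE => /orP [] /eqP ->.
  rewrite cards2 eq_sym sl; case: #|C| => [|[|M]] //; by exists M.
have inj j1 j2 : (j1 < M.+2)%N -> (j2 < M.+2)%N -> (s ^+ j1)%g l = (s ^+ j2)%g l -> j1 = j2.
  by rewrite -HN; apply: porbit_inj_nat.
have pw e : (e <= M)%N -> (s' ^+ e)%g q = (s ^+ e.+1)%g l.
  elim: e => [|e IH] he; first by rewrite expg0 perm1 expg1.
  rewrite permS IH ?(ltnW he) // s'E -permS tpermD //.
    apply/eqP => E; have := inj 0%N e.+2 isT he.
    by rewrite expg0 perm1 => /(_ E).
  apply/eqP => E; have := inj 1%N e.+2 isT he.
  by rewrite expg1 => /(_ E).
have pwM : (s' ^+ M.+1)%g q = q.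
  by rewrite permS pw // s'E -permS -HN porbit_expN tpermL.
have Pq : porbit s' q = [set (s' ^+ (val j))%g q | j : 'I_M.+1].
  by apply: porbit_period.
have PqE : porbit s' q = C :\ l.
  rewrite Pq; apply/setP => y; apply/imsetP/idP.
    move=> [j _ ->]; rewrite pw; last exact: ltn_ord j.
    rewrite in_setD1 /C mem_porbit andbT.
    by apply/eqP => E; have := inj j.+1 0%N (ltn_ord j) isT; rewrite expg0 perm1 => /(_ E).
  rewrite in_setD1 => /andP [yl yC].
  have := yC; rewrite /C (porbit_period (d:=M.+2)) // -?HN ?porbit_expN //.
  move=> /imsetP [[[|j] hj] _ Ey]; first by rewrite Ey /= expg0 perm1 eqxx in yl.
  have hj' : (j < M.+1)%N by rewrite -ltnS -HN.
  by exists (Ordinal hj') => //; rewrite pw.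
have cardq : #|porbit s' q| = M.+1.
  rewrite Pq card_imset ?card_ord // => j1 j2.
  rewrite (pw _ (ltn_ord j1)) (pw _ (ltn_ord j2)) => E.
  by apply: val_inj; have := inj j1.+1 j2.+1 (ltn_ord j1) (ltn_ord j2) E => -[].
have cvC : cval f'' s' (C :\ l) = cval f s C.
  rewrite -PqE /C !(cval_porbit trC) /cyc cardq -/C HN /= !big_cons !expg0 !perm1 expg1.
  rewrite {1}/f'' eqxx -!mulrA; congr (tr (_ * (_ * _))).
  have -> : iota 2 M = [seq e.+1 | e <- iota 1 M] by rewrite (iotaDl 1 1).
  rewrite big_map; apply: eq_big_seq => e; rewrite mem_iota => /andP [e1 e2].
  have eM : (e <= M)%N by rewrite -ltnS -(add1n M).
  rewrite pw // /f''; case: eqP => // E.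
  have := inj e.+1 1%N _ isT; rewrite expg1 => /(_ eM E) [] E1.
  by move: e1; rewrite E1.
change (PD D f s = PD (l |: D) f'' s').
have CP : C \in porbits s by apply: imset_f.
have lD' : ~~ (C \subset D) by apply/subsetPn; exists l.
rewrite (PD_split _ _ CP) lD'.
have ql : q != l by [].
have ne1 : C :\ l != [set l].
  apply/eqP => E; have : q \in C :\ l by rewrite in_setD1 ql qC.
  by rewrite E inE (negbTE ql).
have n2 : C :\ l \notin porbits s :\ C.
  apply/negP => H; have := notin_otherz H qC; by rewrite in_setD1 ql qC.
have n3 : [set l] \notin porbits s :\ C.
  by apply/negP => H; have := notin_other H; rewrite inE eqxx.
have Hperm : perm_eq (enum (porbits s')) ((C :\ l) :: [set l] :: enum (porbits s :\ C)).
  apply: uniq_perm; first exact: enum_uniq.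
    by rewrite /= enum_uniq !in_cons !mem_enum (negbTE ne1) (negbTE n2) n3.
  move=> Y; rewrite mem_enum !in_cons mem_enum; apply/idP/idP.
    move=> /imsetP [y _ ->]; case yC: (y \in C).
      case: (eqVneq y l) => [->|yl]; first by rewrite porbit_fix // eqxx orbT.
      have : y \in porbit s' q by rewrite PqE in_setD1 yl yC.
      by rewrite -eq_porbit_mem PqE => ->.
    rewrite porb_out ?yC // in_setD1 imset_f // andbT.
    have -> : (porbit s y != C) = true.
      by apply/negP => /eqP E; move: yC; rewrite -E porbit_id.
    by rewrite !orbT.
  case/orP => [/eqP -> | /orP [/eqP -> | ]]; first by rewrite -PqE imset_f.
    by rewrite -(porbit_fix s'l) imset_f.
  rewrite in_setD1 => /andP [YC /imsetP [y _ EY]].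
  have yC : y \notin C.
    by apply: contra YC => yC; rewrite EY; rewrite eq_porbit_mem.
  by rewrite EY -porb_out // imset_f.
rewrite /PD (perm_prodZ _ _ Hperm); last by move=> *; exact: cval_central.
rewrite !big_cons.
have -> : ~~ (C :\ l \subset l |: D) = true.
  apply/negP => /subsetP /(_ q); rewrite in_setD1 ql qC !inE (negbTE ql) /= => /(_ isT) qD.
  by have := Dfix _ qD; rewrite /q => /perm_inj E; rewrite E eqxx in sl.
have -> : ([set l] \subset l |: D) = true by rewrite sub1set setU11.
rewrite cvC /=; congr (_ * _).
rewrite big_seq_cond [in RHS]big_seq_cond; apply: eq_big => Y.
  case Ym : (Y \in _) => //=.
  by rewrite subsetU1_notin // (notin_other (s:=s)) // -mem_enum.
move=> /andP [Ym _]; move: Ym; rewrite mem_enum in_setD1 => /andP [YC /imsetP [y _ EY]].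
have yC : y \notin C.
  by apply: contra YC => yC; rewrite EY; rewrite eq_porbit_mem.
rewrite EY -[in RHS](porb_out y yC) !(cval_porbit trC) /cyc (porb_out y yC).
congr (tr _); apply: eq_bigr => e _; have [E1 E2] := powout y e yC.
by rewrite E1 /f''; case: eqP => // Eq; rewrite Eq qC in E2.
Qed.
End Remove.


Section Morph.
Variables (R : pzRingType) (tr : R -> R).
Hypothesis trC : forall r s, tr (r * s) = tr (s * r).
Hypothesis trZ : forall r s, tr r * s = s * tr r.
Variables T1 T2 : finType.

Lemma PD_morph (h : T1 -> T2) (s1 : {perm T1}) (s2 : {perm T2}) (D2 : {set T2}) (f2 : T2 -> R) :
  injective h -> (forall x, s2 (h x) = h (s1 x)) -> (forall y, y \in D2 -> s2 y = y) ->
  (forall x, h x \notin D2) -> (forall y, y \notin D2 -> exists x, y = h x) ->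
  PD tr D2 f2 s2 = PD tr set0 (fun x => f2 (h x)) s1.
Proof.
move=> hinj hs Dfix hD cover.
have pw e x : (s2 ^+ e)%g (h x) = h ((s1 ^+ e)%g x).
  by elim: e => [|e IH]; rewrite ?expg0 ?perm1 // !permS IH hs.
have po x : porbit s2 (h x) = h @: porbit s1 x.
  apply/setP => y; apply/porbitP/imsetP => [[e ->]|[z /porbitP [e ->] ->]].
    by exists ((s1 ^+ e)%g x); rewrite ?pw ?mem_porbit.
  by exists e; rewrite pw.
have cv x : cval tr f2 s2 (porbit s2 (h x)) = cval tr (fun x => f2 (h x)) s1 (porbit s1 x).
  rewrite !(cval_porbit trC) /cyc po card_imset //.
  by congr (tr _); apply: eq_bigr => e _; rewrite pw.
rewrite /PD [RHS]big_seq_cond.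
rewrite (eq_bigl (fun C : {set T1} => C \in enum (porbits s1))); last first.
  move=> C; case Cm: (C \in _) => //=; move: Cm; rewrite mem_enum => /imsetP [x _ ->].
  by apply/negP => /subsetP /(_ x (porbit_id _ _)); rewrite inE.
rewrite -big_seq.
rewrite (eq_big_seq (fun C : {set T1} => cval tr f2 s2 (h @: C))); last first.
  by move=> C; rewrite mem_enum => /imsetP [x _ ->]; rewrite -po cv.
rewrite -(big_map (fun C : {set T1} => h @: C) predT) -big_filter.
apply: perm_prodZ; first by move=> *; exact: cval_central.
apply: uniq_perm; first by rewrite filter_uniq ?enum_uniq.
  by rewrite map_inj_uniq ?enum_uniq //; exact: imset_inj.
move=> Y; rewrite mem_filter mem_enum; apply/andP/mapP.
  move=> [/subsetPn [z zY zD] /imsetP [y _ EY]].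
  have [x Ex] := cover z zD; subst z.
  exists (porbit s1 x); first by rewrite mem_enum imset_f.
  rewrite -po EY; apply/eqP; rewrite eq_sym eq_porbit_mem -EY //.
move=> [C]; rewrite mem_enum => /imsetP [x _ ->] ->; rewrite -po imset_f //.
by split=> //; apply/subsetPn; exists (h x); rewrite ?porbit_id ?hD.
Qed.
End Morph.


Lemma PD_ext (R : pzRingType) (tr : R -> R) (T : finType) D (f g : T -> R) s :
  f =1 g -> PD tr D f s = PD tr D g s.
Proof.
move=> E; apply: eq_bigr => C _; rewrite /cval; case: pickP => // i _.
by congr (tr _); apply: eq_bigr => e _; rewrite E.
Qed.

Section Sem.
Variables (F : fieldType) (A : algType F) (R : algType F) (phi : A -> R) (tr : R -> R).
Hypothesis HR : is_trace_alg phi tr.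

Lemma trC r s : tr (r * s) = tr (s * r). Proof. by case: HR => _ []. Qed.
Lemma trZ r s : tr r * s = s * tr r. Proof. by case: HR => _ []. Qed.
Lemma phi1 : phi 1 = 1. Proof. by case: HR => -[]. Qed.
Lemma phiM a b : phi (a * b) = phi a * phi b. Proof. by case: HR => -[]. Qed.

Lemma eval_tprod x (l : seq (term A)) : eval phi tr x (tprod l) = \prod_(t <- l) eval phi tr x t.
Proof. by elim: l => [|t l IH]; rewrite ?big_nil ?big_cons /= ?phi1 // IH. Qed.

Lemma eval_tsum x (l : seq (term A)) : eval phi tr x (tsum l) = \sum_(t <- l) eval phi tr x t.
Proof. by elim: l => [|t l IH]; rewrite ?big_nil ?big_cons /= ?scale0r // IH. Qed.

Lemma eval_subst x sb (t : term A) :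
  eval phi tr x (subst sb t) = eval phi tr (fun i => eval phi tr x (sb i)) t.
Proof. by elim: t => //= [t1 -> t2 ->|c t ->|t1 -> t2 ->|t ->]. Qed.

Lemma eval_trmon x k (a : k.-tuple A) (s : 'S_k) :
  eval phi tr x (trmon (a, s)) = PD tr set0 (fun j => x (val j) * phi (tnth a j)) (s^-1)%g.
Proof.
rewrite /trmon eval_tprod big_map /PD [RHS]big_seq_cond.
rewrite [RHS](eq_bigl (fun C : {set 'I_k} => C \in enum (porbits (s^-1)%g))); last first.
  move=> C; case Cm: (C \in _) => //=; move: Cm; rewrite mem_enum => Cm.
  have [y _ ->] := imsetP Cm.
  by apply/negP => /subsetP /(_ y (porbit_id _ _)); rewrite inE.
rewrite -[RHS]big_seq; apply: eq_bigr => C _; rewrite /cycle_term /cval.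
case: pickP => [i _|_] /=; last by rewrite phi1.
by rewrite eval_tprod big_map.
Qed.

Definition evw x m (w : wel A m) := \sum_(c <- w) c.1 *: eval phi tr x (trmon c.2).

Lemma eval_trw x m (w : wel A m) : eval phi tr x (trw w) = evw x w.
Proof. by rewrite /trw eval_tsum big_map; apply: eq_bigr => c _. Qed.

End Sem.


Section Ext.
Variables (k n : nat).

Lemma ext_perm_l (p : 'S_k) j : ext_perm n p (lshift n j) = lshift n (p j).
Proof. by rewrite /ext_perm permE /ext_fun (unsplitK (inl _ j)). Qed.

Lemma ext_perm_r (p : 'S_k) j : ext_perm n p (rshift k j) = rshift k j.
Proof. by rewrite /ext_perm permE /ext_fun (unsplitK (inr _ j)). Qed.

Definition extras : {set 'I_(k + n)} := [set i : 'I_(k + n) | (k <= i)%N].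

Lemma lshift_extras j : lshift n j \notin extras.
Proof. by rewrite inE /= -ltnNge. Qed.

Lemma extrasP i : i \in extras -> exists j, i = rshift k j.
Proof.
rewrite inE; case: (splitP i) => [j Ej|j Ej]; first by rewrite Ej leqNgt ltn_ord.
by exists j; apply: ord_inj; rewrite Ej.
Qed.

Lemma notextrasP i : i \notin extras -> exists j, i = lshift n j.
Proof.
rewrite inE; case: (splitP i) => [j Ej|j Ej]; last by rewrite Ej leq_addr.
by exists j; apply: ord_inj; rewrite Ej.
Qed.

Lemma ext_perm_E (p : 'S_k) i : i \in extras -> ext_perm n p i = i.
Proof. by move=> /extrasP [j ->]; rewrite ext_perm_r. Qed.

Lemma ext_permV_l (p : 'S_k) j : (ext_perm n p)^-1%g (lshift n j) = lshift n ((p^-1)%g j).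
Proof. by rewrite -{1}(permKV p j) -ext_perm_l permK. Qed.

Lemma ext_permV_E (p : 'S_k) i : i \in extras -> (ext_perm n p)^-1%g i = i.
Proof. by move=> H; rewrite -{1}(ext_perm_E p H) permK. Qed.

Variables (F : fieldType) (A : algType F).

Lemma tnth_embL (a : k.-tuple A) j : tnth [tuple of cat a (nseq n (1 : A))] (lshift n j) = tnth a j.
Proof. exact: tnth_lshift. Qed.

Lemma tnth_embE (a : k.-tuple A) i : i \in extras -> tnth [tuple of cat a (nseq n (1 : A))] i = 1.
Proof. by move=> /extrasP [j ->]; rewrite (tnth_rshift a [tuple of nseq n (1:A)]) tnth_nseq. Qed.

End Ext.

Section Red.
Variables (F : fieldType) (A : algType F) (k n : nat).
Notation m := (k + n)%N.
Notation emb a := [tuple of cat a (nseq n (1 : A))].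

Lemma card_extras_step (D : {set 'I_m}) l : l \in extras k n :\: D ->
  #|extras k n :\: (l |: D)| = #|extras k n :\: D|.-1.
Proof.
move=> lX; rewrite (cardsD1 l (extras k n :\: D)) lX /=.
apply: eq_card => y; rewrite !inE; case: (y =P l) => //= ->.
Qed.

Lemma red N : forall (tau : 'S_m) (z : 'I_m -> term A) (D : {set 'I_m}),
  #|extras k n :\: D| = N -> D \subset extras k n -> (forall d, d \in D -> tau d = d) ->
  exists p (theta : 'S_k) (z' : 'I_k -> term A), pure p /\
   forall (R : algType F) (phi : A -> R) (tr : R -> R), is_trace_alg phi tr ->
   forall x (a : k.-tuple A) (pi : 'S_k),
   PD tr D (fun i => eval phi tr x (z i) * phi (tnth (emb a) i)) ((ext_perm n pi)^-1 * tau)%g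
   = eval phi tr x p * PD tr set0 (fun j => eval phi tr x (z' j) * phi (tnth a j)) (pi^-1 * theta)%g.
Proof.
elim: N => [|N IH] tau z D HN HD Hfix.
  have XD : forall y, y \in extras k n -> y \in D.
    move=> y yX; apply/negPn/negP => yD; move: HN.
    by rewrite (cardsD1 y) in_setD (negbTE yD) yX /= add1n.
  have tl j : exists j', tau (lshift n j) = lshift n j'.
    apply: notextrasP; apply/negP => /XD tD; have := Hfix _ tD => /perm_inj E.
    by move: tD; rewrite E => /(subsetP HD); rewrite (negbTE (lshift_extras _ _)).
  pose th j := if split (tau (lshift n j)) is inl j' then j' else j.
  have thE j : tau (lshift n j) = lshift n (th j).
    by rewrite /th; have [j' ->] := tl j; rewrite (unsplitK (inl _ j')).
  have thinj : injective th.
    by move=> j1 j2 E; apply: (@lshift_inj k n); apply: (@perm_inj _ tau); rewrite !thE E.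
  exists (TAct 1), (perm thinj), (fun j => z (lshift n j)); split; first exact: pure_one.
  move=> R phi tr HR x a pi.
  rewrite /= (phi1 HR) mul1r.
  rewrite (@PD_morph _ _ (trC HR) (trZ HR) _ _ (lshift n) (pi^-1 * perm thinj)%g); first last.
  - move=> y yD; apply: notextrasP; apply/negP => /XD; by rewrite (negbTE yD).
  - by move=> j; apply/negP => /(subsetP HD); rewrite (negbTE (lshift_extras _ _)).
  - move=> d dD; have dX := subsetP HD d dD.
    by rewrite permM ext_permV_E // Hfix.
  - by move=> j; rewrite !permM ext_permV_l thE permE.
  - exact: (@lshift_inj k n).
  by apply: PD_ext => j; rewrite tnth_embL.
have [l lX] : exists l, l \in extras k n :\: D.
  by apply/set0Pn; rewrite -card_gt0 HN.
have HN' : #|extras k n :\: (l |: D)| = N by rewrite card_extras_step // HN.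
have lD : l \notin D by move: lX; rewrite inE => /andP [].
have lXX : l \in extras k n by move: lX; rewrite inE => /andP [].
have HD' : l |: D \subset extras k n by rewrite subUset sub1set lXX HD.
case: (eqVneq (tau l) l) => [tl | tl].
  have Hfix' : forall d, d \in l |: D -> tau d = d.
    by move=> d; rewrite in_setU1 => /orP [/eqP -> //|]; exact: Hfix.
  have [p [th [z' [pp Hp]]]] := IH tau z _ HN' HD' Hfix'.
  exists (TMul (TTr (TMul (z l) (TAct 1))) p), th, z'; split.
    by apply: pure_mul => //; exact: pure_tr.
  move=> R phi tr HR x a pi.
  rewrite (PD_fixed (trZ HR) _ (l := l)) //; last by rewrite permM ext_permV_E.
  by rewrite (Hp _ _ _ HR) /= (tnth_embE a lXX) mulrA.
pose q := tau l.
pose tau' : 'S_m := (tau * tperm l q)%g.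
pose z'' j := if j == q then TMul (z l) (z j) else z j.
have Hfix' : forall d, d \in l |: D -> tau' d = d.
  move=> d; rewrite in_setU1 => /orP [/eqP ->|dD]; first by rewrite permM tpermR.
  rewrite permM Hfix // tpermD //.
    by apply: contraNneq lD => ->.
  apply: contraNneq lD => E; rewrite /q in E.
  by have := Hfix _ dD; rewrite -E => /perm_inj E2; rewrite E2 eqxx in tl.
have [p [th [z' [pp Hp]]]] := IH tau' z'' _ HN' HD' Hfix'.
exists p, th, z'; split => // R phi tr HR x a pi.
rewrite (PD_remove (trC HR) (trZ HR) _ (l := l)); first last.
- by rewrite permM ext_permV_E.
- by [].
- by move=> d dD; rewrite permM ext_permV_E ?Hfix // (subsetP HD).
rewrite -(Hp _ _ _ HR).
have Es : ((ext_perm n pi)^-1 * tau)%g l = q by rewrite permM ext_permV_E.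
rewrite Es (_ : ((ext_perm n pi)^-1 * tau * tperm l q)%g = ((ext_perm n pi)^-1 * tau')%g); last first.
  by rewrite /tau' mulgA.
apply: PD_ext => j; rewrite /z''; case: eqP => // _ /=.
by rewrite (tnth_embE a lXX) (phi1 HR) mulr1 mulrA.
Qed.
End Red.


Section Core.
Variables (F : fieldType) (A : algType F) (k n : nat).
Notation m := (k + n)%N.

Definition ones : k.-tuple A := [tuple (1 : A) | _ < k].

Lemma core (g h : wmon A m) : exists p zs (th : 'S_k), pure p /\
  forall (R : algType F) (phi : A -> R) (tr : R -> R), is_trace_alg phi tr ->
  forall x (e : wmon A k),
  eval phi tr x (trmon (wmon_mul (wmon_mul g (wmon_emb n e)) h)) =
  eval phi tr x p * eval phi tr x (subst zs (trmon (wmon_mul e (ones, th)))).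
Proof.
case: g => b be; case: h => c ga.
pose tau : 'S_m := (ga^-1 * be^-1)%g.
pose w i := (ga^-1)%g ((tau^-1)%g i).
pose z i := TMul (TAct (tnth c ((tau^-1)%g i))) (TMul (TVar A (val (w i))) (TAct (tnth b (w i)))).
have Hf : forall d, d \in (set0 : {set 'I_m}) -> tau d = d by move=> d; rewrite inE.
have [p [th [z' [pp Hp]]]] := @red F A k n #|extras k n :\: set0| tau z set0 erefl (sub0set _) Hf.
exists p, (fun j => if @insub _ (fun j => j < k)%N 'I_k j is Some i then z' i else TVar A j), (th^-1)%g; split => //.
move=> R phi tr HR x [a pi].
rewrite eval_subst !eval_trmon /Defs.pcomp.
set PE := ext_perm n pi.
have -> : ((th^-1 * pi)^-1)%g = (pi^-1 * th)%g by rewrite invMg invgK.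
rewrite [in RHS](@PD_ext _ _ _ _ _ (fun j => eval phi tr x (z' j) * phi (tnth a j))); last first.
  by move=> j; rewrite valK !tnth_mktuple mulr1.
rewrite -(Hp _ _ _ HR).
set s := ((ga * (PE * be))^-1)%g.
pose X (j : 'I_m) := x (val j) * phi (tnth b j).
pose H (j : 'I_m) := phi (tnth [tuple of a ++ nseq n 1] ((be^-1)%g j)) * phi (tnth c (((PE * be)^-1)%g j)).
rewrite (@PD_ext _ _ _ _ _ (fun j => X j * H j)); last first.
  by move=> j; rewrite !tnth_mktuple !(phiM HR) /X /H !mulrA.
rewrite (PD_regroup (trC HR)).
pose Y (r : 'I_m) := phi (tnth c r) * X ((ga^-1)%g r).
have sbe t : s (be t) = (ga^-1)%g ((PE^-1)%g t) by rewrite /s !invMg !permM permK.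
rewrite (@PD_morph _ _ (trC HR) (trZ HR) _ _ (fun t => be t) ((PE^-1 * tau)%g) s set0); first last.
- by move=> y _; exists ((be^-1)%g y); rewrite permKV.
- by move=> t; rewrite inE.
- by move=> y; rewrite inE.
- by move=> t; rewrite sbe /tau !permM permKV.
- exact: perm_inj.
rewrite (@PD_ext _ _ _ _ _ (fun t => phi (tnth [tuple of a ++ nseq n 1] t) * Y ((PE^-1)%g t))); last first.
  by move=> t; rewrite /H /Y sbe invMg permM !permK mulrA.
rewrite (PD_regroup (trC HR)).
have tauE y : (be^-1)%g ((ga^-1)%g y) = tau y by rewrite /tau permM.
rewrite [LHS](@PD_morph _ _ (trC HR) (trZ HR) _ _ (fun i => (tau^-1 * PE)%g i) ((PE^-1 * tau)%g) _ set0); first last.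
- by move=> y _; exists (((tau^-1 * PE)^-1)%g y); rewrite permKV.
- by move=> t; rewrite inE.
- by move=> y; rewrite inE.
- by move=> t; rewrite !permM -/PE permK !tauE permKV permK permKV.
- exact: perm_inj.
apply: PD_ext => i; rewrite !permM permK tauE permKV /Y /X /=.
by rewrite mulrA.
all: exact: HR.
Qed.
End Core.


Section Assembly.
Variables (F : fieldType) (A : algType F).

Definition semP (t : term A) (Fs : forall R : algType F, (A -> R) -> (R -> R) -> (nat -> R) -> R) :=
  forall (R : algType F) (phi : A -> R) (tr : R -> R), is_trace_alg phi tr ->
  forall x, eval phi tr x t = Fs R phi tr x.

Lemma cq_sum (G : term A -> Prop) (Y : eqType) (L : seq Y)
  (Fs : Y -> forall R : algType F, (A -> R) -> (R -> R) -> (nat -> R) -> R) :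
  consequence G (@tzero F A) ->
  (forall y, y \in L -> exists t, consequence G t /\ semP t (Fs y)) ->
  exists t, consequence G t /\ semP t (fun R phi tr x => \sum_(y <- L) Fs y R phi tr x).
Proof.
move=> G0; elim: L => [|y L IH] H.
  exists (@tzero F A); split => // R phi tr HR x; by rewrite big_nil /= scale0r.
have [t1 [c1 s1]] := H y (mem_head _ _).
have [t2 [c2 s2]] : exists t, consequence G t /\ semP t (fun R phi tr x => \sum_(y <- L) Fs y R phi tr x).
  by apply: IH => z zL; apply: H; rewrite in_cons zL orbT.
exists (TAdd t1 t2); split; first exact: cq_add.
by move=> R phi tr HR x; rewrite big_cons /= s1 // s2.
Qed.

Lemma evw_mul (R : algType F) (phi : A -> R) (tr : R -> R) x m (v w : wel A m) :
  evw phi tr x (wel_mul v w) =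
  \sum_(c <- v) \sum_(d <- w) (c.1 * d.1) *: eval phi tr x (trmon (wmon_mul c.2 d.2)).
Proof. by rewrite /evw /wel_mul big_allpairs_dep. Qed.

Lemma sound (G : term A -> Prop) (R : algType F) (phi : A -> R) (tr : R -> R) t :
  is_trace_alg phi tr -> (forall t', G t' -> is_identity phi tr t') ->
  consequence G t -> is_identity phi tr t.
Proof.
move=> HR HG; elim => {t} [t /HG //|sb t _ IH|t1 t2 _ IH1 _ IH2|c t _ IH|p t _ _ IH|t t' _ IH E] x /=.
- by rewrite (eval_subst phi tr x sb t) IH.
- by rewrite IH1 IH2 addr0.
- by rewrite IH scaler0.
- by rewrite IH mulr0.
- by rewrite -(E _ _ _ HR) IH.
Qed.
End Assembly.


End Helpers.
Import Helpers.
Import GRing.Theory.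

Theorem lemma5p7 (F : fieldType) (A : algType F)
  (charF0 : [pchar F] =i pred0) (ssA : semisimple_alg A)
  (R : algType F) (phi : A -> R) (tr : R -> R) (HR : is_trace_alg phi tr)
  (k : nat)
  (Wk := fun w : wel A k => is_identity phi tr (trw w))
  (Wk_ideal : forall v w : wel A k, Wk w -> Wk (wel_mul v w) /\ Wk (wel_mul w v))
  (n : nat) (s : seq (wel A (k + n) * wel A k * wel A (k + n))) :
  (forall x, x \in s -> Wk x.1.2) ->
  let u := flatten [seq wel_mul (wel_mul x.1.1 (wel_emb n x.1.2)) x.2 | x <- s] in
  consequence (fun t => exists2 w, Wk w & t = trw w) (trw u)
  /\ is_identity phi tr (trw u).
Proof.
move=> Hs u.
set G := fun t => exists2 w, Wk w & t = trw w.
have G0 : consequence G (@tzero F A).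
  apply: cq_gen; rewrite /G; exists [::]; last by [].
  by move=> x; rewrite /= scale0r.
have [t [ct st]] : exists t, consequence G t /\ semP t (fun R phi tr x => evw phi tr x u).
  suff [t [ct st]] : exists t, consequence G t /\ semP t (fun R phi tr x => \sum_(y <- s)
      evw phi tr x (wel_mul (wel_mul y.1.1 (wel_emb n y.1.2)) y.2)).
    exists t; split => // R0 phi0 tr0 HR0 x; rewrite st // /u /evw big_flatten big_map.
    by apply: eq_bigr.
  apply: cq_sum => // -[[v w] v'] yin; have Hw : Wk w := Hs _ yin.
  suff [t [ct st]] : exists t, consequence G t /\ semP t (fun R phi tr x => \sum_(c <- v)
      \sum_(d <- v') \sum_(e <- w)
         ((c.1 * e.1) * d.1) *: eval phi tr x (trmon (wmon_mul (wmon_mul c.2 (wmon_emb n e.2)) d.2))).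
    exists t; split => // R0 phi0 tr0 HR0 x; rewrite st //= evw_mul big_allpairs_dep.
    apply: eq_bigr => c _; rewrite big_map exchange_big /=.
    by apply: eq_bigr => d _; apply: eq_bigr => e _.
  apply: cq_sum => // c _.
  apply: cq_sum => // d _.
  have [p [zs [th [pp Hp]]]] := @core F A k n c.2 d.2.
  pose w' := wel_mul w [:: (1, (ones A k, th))].
  have Hw' : Wk w' := (Wk_ideal [:: (1, (ones A k, th))] w Hw).2.
  exists (TScale (c.1 * d.1) (TMul p (subst zs (trw w')))); split.
    by apply: cq_scale; apply: cq_mul => //; apply: cq_subst; apply: cq_gen; exists w'.
  move=> R0 phi0 tr0 HR0 x /=.
  rewrite (eval_subst phi0 tr0 x zs) eval_trw evw_mul mulr_sumr scaler_sumr.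
  apply: eq_bigr => e _; rewrite big_cons big_nil addr0 /= mulr1.
  rewrite (Hp _ _ _ HR0) (eval_subst phi0 tr0 x zs) scalerAr scalerA.
  by rewrite scalerAr mulrAC.
have cu : consequence G (trw u).
  apply: (cq_equiv ct) => R0 phi0 tr0 HR0 x.
  by rewrite st // eval_trw.
split => //; apply: (sound HR _ cu).
by move=> t' [w Hw ->].
Qed.
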